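(* Let $P,Q\in\mathbb{T}^{r\times r}$ such that every column of $P$ and $Q^\top$ has at least one entry distinct from $-\infty$. Suppose that every column of $P$ and $Q^\top$ has a unique maximizing entry. Then there are at most $2^r-1$ tropical Nash equilibria.
   Context: $\mathbb{T}=\mathbb{R}\cup\{-\infty\}$ is the max-plus semifield ($\oplus=\max$, $\odot=+$), and $\Delta^{\mathrm{trop}}_p=\{z\in\mathbb{T}^{p+1}:\bigoplus_k z_k=0\}$. A tropical Nash equilibrium of $(P,Q)$ is a pair $(x^*,y^* )\in\Delta^{\mathrm{trop}}_{r-1}\times\Delta^{\mathrm{trop}}_{r-1}$ such that for all $i$, $x^*_i>-\infty$ implies $(P\odot y^* )_i\geq(P\odot y^* )_k$ for all $k$, and for all $j$, $y^*_j>-\infty$ implies $(Q^\top\odot x^* )_j\geq(Q^\top\odot x^* )_l$ for all $l$. *)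

(* Defs.v *)
From HB Require Import structures.
From mathcomp Require Import all_boot all_order all_algebra.
From mathcomp Require Import reals.
Set Implicit Arguments. Unset Strict Implicit. Unset Printing Implicit Defensive.
Import Order.TTheory GRing.Theory Num.Theory.
Local Open Scope ring_scope.

(* The max-plus semifield T = R ∪ {-oo}: None stands for -oo, Some a for a. *)
Definition trop (R : realType) := option R.

Definition tmax (R : realType) (a b : trop R) : trop R :=
  match a, b with
  | None, _ => b
  | _, None => a
  | Some x, Some y => Some (Num.max x y)
  end.

Definition tmul (R : realType) (a b : trop R) : trop R :=
  match a, b with
  | Some x, Some y => Some (x + y)
  | _, _ => None
  end.

Definition tle (R : realType) (a b : trop R) : bool :=
  match a, b with
  | None, _ => true
  | Some _, None => false
  | Some x, Some y => x <= y
  end.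

Definition tvec (R : realType) (r : nat) := {ffun 'I_r -> trop R}.
Definition tmat (R : realType) (r : nat) := 'I_r -> 'I_r -> trop R.

Definition tsum (R : realType) (r : nat) (z : 'I_r -> trop R) : trop R :=
  \big[@tmax R/None]_(k < r) z k.

Definition tsimplex (R : realType) (r : nat) (z : tvec R r) : Prop :=
  tsum (fun k => z k) = Some 0.

Definition tmatvec (R : realType) (r : nat) (P : tmat R r) (y : 'I_r -> trop R)
  (i : 'I_r) : trop R := tsum (fun k => tmul (P i k) (y k)).

Definition ttrmx (R : realType) (r : nat) (Q : tmat R r) : tmat R r :=
  fun i j => Q j i.

Definition tropical_nash (R : realType) (r : nat) (P Q : tmat R r)
  (x y : tvec R r) : Prop :=
  [/\ tsimplex x, tsimplex y,
      (forall i, x i != None ->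
         forall k, tle (tmatvec P (fun j => y j) k) (tmatvec P (fun j => y j) i)) &
      (forall j, y j != None ->
         forall l, tle (tmatvec (ttrmx Q) (fun i => x i) l)
                       (tmatvec (ttrmx Q) (fun i => x i) j))].

Definition cols_finite (R : realType) (r : nat) (A : tmat R r) : Prop :=
  forall j, exists i, A i j != None.

Definition cols_unique_max (R : realType) (r : nat) (A : tmat R r) : Prop :=
  forall j, exists! i, forall k, tle (A k j) (A i j).

(* Main.v *)
Require Import Defs.
From mathcomp Require Import all_boot all_order all_algebra.
From mathcomp Require Import reals lra.
From Stdlib Require Import Lia.
From mathcomp Require Import zify.
Import Order.TTheory GRing.Theory Num.Theory.
Local Open Scope ring_scope.
Set Implicit Arguments. Unset Strict Implicit.

Lemma tle_refl (R : realType) (a : trop R) : tle a a.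
Proof. by case: a => //= x. Qed.

Lemma tle_trans (R : realType) (a b c : trop R) : tle a b -> tle b c -> tle a c.
Proof. case: a; case: b; case: c => //= x y z; exact: le_trans. Qed.

Lemma tle_anti (R : realType) (a b : trop R) : tle a b -> tle b a -> a = b.
Proof. case: a => [x|]; case: b => [y|] //= h1 h2; congr Some; apply/eqP; by rewrite eq_le h1 h2. Qed.

Lemma tmax_spec (R : realType) (a b : trop R) :
  [/\ tle a (tmax a b), tle b (tmax a b) & (tmax a b = a \/ tmax a b = b)].
Proof.
case: a => [x|]; case: b => [y|] /=; rewrite ?tle_refl; try by split; auto.
split; [by rewrite le_max lexx | by rewrite le_max lexx orbT |].
by rewrite maxEle; case: ifP; auto.
Qed.

Lemma big_tmax_spec (R : realType) (I : eqType) (s : seq I) (z : I -> trop R) :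
  (forall m, m \in s -> tle (z m) (\big[@tmax R/None]_(k <- s) z k)) /\
  ((\big[@tmax R/None]_(k <- s) z k) = None \/
     exists2 k, k \in s & (\big[@tmax R/None]_(k <- s) z k) = z k).
Proof.
elim: s => [|a s [IH1 IH2]]; first by rewrite big_nil; split => //; left.
rewrite big_cons; have [h1 h2 h3] := @tmax_spec R (z a) (\big[@tmax R/None]_(k <- s) z k).
split.
  move=> m; rewrite in_cons => /orP [/eqP -> //|ms].
  exact: tle_trans (IH1 _ ms) h2.
case: h3 => ->; first by right; exists a => //; rewrite in_cons eqxx.
case: IH2 => [->|[k ks ->]]; first by left.
by right; exists k => //; rewrite in_cons ks orbT.
Qed.

Lemma tsum_spec (R : realType) r (z : 'I_r -> trop R) :
  (forall m, tle (z m) (tsum z)) /\ (tsum z = None \/ exists k, tsum z = z k).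
Proof.
have [h1 h2] := @big_tmax_spec R _ (index_enum 'I_r) z.
split; first by move=> m; apply: h1; rewrite mem_index_enum.
case: h2 => [h|[k _ h]]; [by left | by right; exists k].
Qed.

Lemma simplex_spec (R : realType) r (y : tvec R r) : tsimplex y ->
  (forall m, tle (y m) (Some 0)) /\ exists k, y k = Some 0.
Proof.
rewrite /tsimplex => h; have [h1 h2] := @tsum_spec R r (fun k => y k).
rewrite h in h1 h2; split => //; case: h2 => [//|[k hk]]; by exists k.
Qed.

Definition sigm (R : realType) r (A : tmat R r) (k : 'I_r) : 'I_r :=
  odflt k [pick i | [forall m, tle (A m k) (A i k)]].

Lemma sigP (R : realType) r (A : tmat R r) : cols_unique_max A -> forall k,
  (forall m, tle (A m k) (A (sigm A k) k)) /\
  (forall i, (forall m, tle (A m k) (A i k)) -> i = sigm A k).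
Proof.
move=> HU k; have [i [Hi Hu]] := HU k; rewrite /sigm; case: pickP => [j /forallP Hj | H].
  split => // i' Hi'; rewrite -(Hu i' Hi'); exact: Hu.
by move: (H i); rewrite (_ : [forall m, _] = true) //; apply/forallP.
Qed.

Lemma tle_someN (R : realType) (a b : trop R) : tle a b -> a != None -> b != None.
Proof. by case: a; case: b. Qed.

Lemma L1 (R : realType) r (A : tmat R r) (x y : tvec R r) :
  cols_finite A -> cols_unique_max A -> tsimplex y ->
  (forall i, x i != None -> forall k,
     tle (tmatvec A (fun j => y j) k) (tmatvec A (fun j => y j) i)) ->
  forall i, x i != None -> exists k, [/\ y k != None, sigm A k = i,
    tmatvec A (fun j => y j) i = tmul (A i k) (y k) &
    tmatvec A (fun j => y j) i != None].
Proof.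
move=> HF HU Hy HA i xi.
have [_ [k0 yk0]] := simplex_spec Hy.
have [i0 Hi0] := HF k0.
have [Hs _] := sigP HU k0.
have uN : tmatvec A (fun j => y j) i != None.
  apply: (tle_someN (HA i xi (sigm A k0))).
  have [h1 _] := @tsum_spec R r (fun k => tmul (A (sigm A k0) k) (y k)).
  apply: (tle_someN (h1 k0)); rewrite yk0.
  have := tle_someN (Hs i0) Hi0; by case: (A (sigm A k0) k0).
have [h1 [h2|[k hk]]] := @tsum_spec R r (fun k => tmul (A i k) (y k)).
  by rewrite /tmatvec h2 in uN.
rewrite /tmatvec hk in uN.
exists k; split => //.
- by move: uN; case: (y k); case: (A i k).
- symmetry; apply: (proj2 (sigP HU k)) => m.
  have hm := HA i xi m.
  have [g1 _] := @tsum_spec R r (fun k => tmul (A m k) (y k)).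
  have := tle_trans (g1 k) hm; rewrite /tmatvec hk.
  move: uN; case: (y k) => [c|] //; case: (A i k) => [a|] //; case: (A m k) => [b|] //= _.
  by rewrite lerD2r.
- by rewrite /tmatvec hk.
Qed.

Lemma card_bij (T1 : finType) (S T : {set T1}) (f g : T1 -> T1) :
  S \subset f @: T -> T \subset g @: S ->
  {in T &, injective f} /\ f @: T = S.
Proof.
move=> h1 h2.
have c1 := subset_leq_card h1; have c2 := subset_leq_card h2.
have c3 := leq_imset_card f T; have c4 := leq_imset_card g S.
split.
  apply/imset_injP; rewrite eqn_leq c3 /=; lia.
apply/esym/eqP; rewrite eqEcard h1 /=; lia.
Qed.

Lemma side (R : realType) r (A B : tmat R r) (x y : tvec R r) :
  cols_finite A -> cols_unique_max A -> cols_finite B -> cols_unique_max B ->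
  tsimplex x -> tsimplex y ->
  (forall i, x i != None -> forall k,
     tle (tmatvec A (fun j => y j) k) (tmatvec A (fun j => y j) i)) ->
  (forall j, y j != None -> forall l,
     tle (tmatvec B (fun i => x i) l) (tmatvec B (fun i => x i) j)) ->
  [/\ sigm A @: [set k | y k != None] = [set i | x i != None],
      forall k k2, y k != None -> y k2 != None ->
        tmul (A (sigm A k) k) (y k) = tmul (A (sigm A k2) k2) (y k2)
    & forall k, y k != None -> tmul (A (sigm A k) k) (y k) != None].
Proof.
move=> HFA HUA HFB HUB Hx Hy HA HB.
set S := [set i | x i != None]; set T := [set k | y k != None].
have hS : S \subset sigm A @: T.
  apply/subsetP => i; rewrite inE => xi.
  have [k [yk sk _ _]] := L1 HFA HUA Hy HA xi.
  by rewrite -sk; apply: imset_f; rewrite inE.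
have hT : T \subset sigm B @: S.
  apply/subsetP => i; rewrite inE => xi.
  have [k [yk sk _ _]] := L1 HFB HUB Hx HB xi.
  by rewrite -sk; apply: imset_f; rewrite inE.
have [inj eq] := card_bij hS hT.
have key : forall k, y k != None ->
  [/\ tmatvec A (fun j => y j) (sigm A k) = tmul (A (sigm A k) k) (y k),
      tmatvec A (fun j => y j) (sigm A k) != None & x (sigm A k) != None].
  move=> k yk.
  have : sigm A k \in S by rewrite -eq; apply: imset_f; rewrite inE.
  rewrite inE => xs.
  have [k' [yk' sk' e n]] := L1 HFA HUA Hy HA xs.
  have kk : k' = k by apply: inj; rewrite ?inE.
  by subst k'.
split => //.
  move=> k k2 yk yk2.
  have [e1 n1 x1] := key k yk; have [e2 n2 x2] := key k2 yk2.
  by rewrite -e1 -e2; apply: tle_anti; apply: HA.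
by move=> k yk; have [e1 n1 _] := key k yk; rewrite -e1.
Qed.

Lemma det (R : realType) r (y y' : tvec R r) (c : 'I_r -> trop R) :
  tsimplex y -> tsimplex y' -> (forall k, (y k != None) = (y' k != None)) ->
  (forall k k2, y k != None -> y k2 != None -> tmul (c k) (y k) = tmul (c k2) (y k2)) ->
  (forall k k2, y' k != None -> y' k2 != None -> tmul (c k) (y' k) = tmul (c k2) (y' k2)) ->
  (forall k, y k != None -> tmul (c k) (y k) != None) -> y = y'.
Proof.
move=> Hy Hy' Hs E E' N.
have [le1 [k0 e0]] := simplex_spec Hy; have [le1' [k1 e1]] := simplex_spec Hy'.
apply/ffunP => k.
have hk := Hs k.
case Eyk: (y k) => [a|]; last first.
  by move: hk; rewrite Eyk /=; case: (y' k).
case Eyk': (y' k) => [a'|]; last by move: hk; rewrite Eyk Eyk'.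
have y0N : y k0 != None by rewrite e0.
have y1N' : y' k1 != None by rewrite e1.
have y1N : y k1 != None by rewrite Hs.
have y0N' : y' k0 != None by rewrite -Hs.
have ykN : y k != None by rewrite Eyk.
have ykN' : y' k != None by rewrite Eyk'.
have n0 := N k0 y0N; have n1 := N k1 y1N; have nk := N k ykN.
have A1 := E k k0 ykN y0N; have A2 := E k1 k0 y1N y0N.
have A3 := E' k k1 ykN' y1N'; have A4 := E' k0 k1 y0N' y1N'.
have L1 := le1 k1; have L2 := le1' k0.
move: n0 n1 nk A1 A2 A3 A4 L1 L2 y1N y0N'; rewrite e0 e1 Eyk Eyk'.
case: (c k) => [ck|] //; case: (c k0) => [c0|] //; case: (c k1) => [c1|] //.
case: (y k1) => [b|] //; case: (y' k0) => [b'|] //= _ _ _ [A1] [A2] [A3] [A4] L1 L2 _ _.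
congr Some; lra.
Qed.

Theorem proposition6p2 (R : realType) (r : nat) (P Q : tmat R r) :
  cols_finite P -> cols_finite (ttrmx Q) ->
  cols_unique_max P -> cols_unique_max (ttrmx Q) ->
  forall s : seq (tvec R r * tvec R r),
    uniq s ->
    (forall xy, xy \in s -> tropical_nash P Q xy.1 xy.2) ->
    (size s <= 2 ^ r - 1)%N.
Proof.
move=> HFP HFQ HUP HUQ s us Hs.
pose F := fun xy : tvec R r * tvec R r => [set i | xy.1 i != None].
have inj : {in s &, injective F}.
  move=> [x y] [x' y'] h h' eF.
  have [Hx Hy HA HB] := Hs _ h; have [Hx' Hy' HA' HB'] := Hs _ h'.
  rewrite /= in Hx Hy HA HB Hx' Hy' HA' HB'.
  have [p1 p2 p3] := side HFP HUP HFQ HUQ Hx Hy HA HB.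
  have [q1 q2 q3] := side HFQ HUQ HFP HUP Hy Hx HB HA.
  have [p1' p2' p3'] := side HFP HUP HFQ HUQ Hx' Hy' HA' HB'.
  have [q1' q2' q3'] := side HFQ HUQ HFP HUP Hy' Hx' HB' HA'.
  rewrite /F /= in eF.
  have ex : x = x'.
    apply: (det Hx Hx') q2 q2' q3 => k.
    by move/setP/(_ k): eF; rewrite !inE.
  subst x'.
  have ey : y = y'.
    apply: (det Hy Hy') p2 p2' p3 => k.
    by move/setP/(_ k): (etrans (esym q1) q1'); rewrite !inE.
  by rewrite ey.
have u : uniq (map F s) by rewrite map_inj_in_uniq.
rewrite -(size_map F) -(card_uniqP u).
have cT : #|{set 'I_r}| = (2 ^ r)%N.
  by rewrite -cardsT -powersetT card_powerset cardsT card_ord.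
rewrite -cT subn1 -(cardC1 (set0 : {set 'I_r})).
apply: (@subset_leq_card _ (mem (map F s)) (predC1 set0)).
apply/subsetP => S /mapP [[x y] h ->] /=.
have [Hx _ _ _] := Hs _ h.
have [_ [k ek]] := simplex_spec Hx.
rewrite inE; apply/set0Pn; exists k; by rewrite inE /= ek.
Qed.
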